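(* Let $(\mathcal{G}(u_0,v_0),-\Omega^2\,du\,dv)$ with radial function $r$ and stress-energy components $T_{uu},T_{uv},T_{vv}$ be as described in the context, satisfying assumptions (I)–(VII), and suppose there is $\delta>0$ such that, with $\mathcal{W}=\mathcal{W}(\delta)$, condition (A), $T_{uv}\Omega^{-2}<\frac1{4r^2}$, holds on $\mathcal{A}\cap\mathcal{W}$. If $\mathcal{A}\cap\mathcal{W}=\emptyset$, then $\mathcal{W}\cap\mathcal{R}$ contains a rectangle $K(u_1,v_1)=[0,u_1]\times[v_1,\infty)$ for some $u_1\in(0,u_0]$, $v_1\in[v_0,\infty)$.
   Context: Fix double null coordinates $(u,v)$ on $\mathbb{R}^2$ with Minkowski metric $-du\,dv$, time-oriented so that $u,v$ increase toward the future. For $u,v>0$, $K(u,v)=[0,u]\times[v,\infty)$. Fix $u_0,v_0>0$, $\mathcal{C}_{in}=[0,u_0]\times\{v_0\}$, $\mathcal{C}_{out}=\{0\}\times[v_0,\infty)$; causal notions refer to $K(u_0,v_0)$. Let $\mathcal{G}(u_0,v_0)\subset K(u_0,v_0)$ be globally hyperbolic, relatively open, containing $\mathcal{C}_{in}\cup\mathcal{C}_{out}$, with metric $-\Omega^2du\,dv$ ($\Omega>0$ smooth), smooth $r\ge0$ with $r>0$ on $\mathcal{C}_{in}\cup\mathcal{C}_{out}$, and smooth $T_{uu},T_{uv},T_{vv}$ (stress-energy components of the spherically symmetric spacetime $-\Omega^2du\,dv+r^2g_{S^2}$) satisfying $\partial_u(\Omega^{-2}\partial_u r)=-r\Omega^{-2}T_{uu}$,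 $\partial_v(\Omega^{-2}\partial_v r)=-r\Omega^{-2}T_{vv}$, $\partial_u m=2r^2\Omega^{-2}(T_{uv}\partial_u r-T_{uu}\partial_v r)$, $\partial_v m=2r^2\Omega^{-2}(T_{uv}\partial_v r-T_{vv}\partial_u r)$, with $m=\frac r2(1+4\Omega^{-2}\partial_u r\partial_v r)$. Define $\mathcal{R}=\{\partial_v r>0,\partial_u r<0\}$, $\mathcal{T}=\{\partial_v r<0,\partial_u r<0\}$, $\mathcal{A}=\{\partial_v r=0,\partial_u r<0\}$, $r_+=\sup_{\mathcal{C}_{out}}r$, $m_+=\sup_{\mathcal{C}_{out}}m$, $\mathcal{W}(\delta)=\{(u,v)\in\mathcal{G}(u_0,v_0):r\ge r_+-\delta\}$. Assumptions: (I) $T_{uu},T_{uv},T_{vv}\ge0$; (II) $J^-(\mathcal{G}(u_0,v_0))\subset\mathcal{G}(u_0,v_0)$; (III) $r\le r_+<\infty$ on $\mathcal{C}_{out}$; (IV) $0\le m\le m_+<\infty$ on $\mathcal{C}_{out}$; (V) $\partial_u r<0$ on $\mathcal{C}_{out}$; (VI) $\partial_v r>0$ on $\mathcal{C}_{out}$; (VII) (closures in $K(u_0,v_0)$) if $p\in\overline{\mathcal{R}}$, $q\in\overline{\mathcal{R}}\cap I^-(p)$, $J^-(p)\cap J^+(q)\setminus\{p\}\subset\mathcal{R}\cup\mathcal{A}$, then $p\in\mathcal{R}\cup\mathcal{A}$. *)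

(* Defs.v *)
From Stdlib Require Import Reals Lra List.
From Coquelicot Require Import Coquelicot.
Open Scope R_scope.

(* Points of R^2 are written in double null coordinates (u,v); subsets of
   R^2 are predicates R -> R -> Prop, functions are R -> R -> R. *)

Definition in_ball (a b eps u v : R) : Prop := (u - a) ^ 2 + (v - b) ^ 2 < eps ^ 2.

Definition open2 (U : R -> R -> Prop) : Prop :=
  forall a b, U a b -> exists eps, 0 < eps /\ forall u v, in_ball a b eps u v -> U u v.

Definition rel_open (K G : R -> R -> Prop) : Prop :=
  forall a b, G a b -> exists eps, 0 < eps /\
    forall u v, in_ball a b eps u v -> K u v -> G u v.

Definition closure2 (A : R -> R -> Prop) (a b : R) : Prop :=
  forall eps, 0 < eps -> exists u v, A u v /\ in_ball a b eps u v.

Definition compact2 (A : R -> R -> Prop) : Prop :=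
  forall (I : Type) (O : I -> R -> R -> Prop),
    (forall i, open2 (O i)) ->
    (forall u v, A u v -> exists i, O i u v) ->
    exists l : list I, forall u v, A u v -> exists i, In i l /\ O i u v.

Definition continuous2_at (f : R -> R -> R) (a b : R) : Prop :=
  forall eps, 0 < eps -> exists delta, 0 < delta /\
    forall u v, in_ball a b delta u v -> Rabs (f u v - f a b) < eps.

Definition pu (f : R -> R -> R) : R -> R -> R := fun u v => Derive (fun x => f x v) u.
Definition pv (f : R -> R -> R) : R -> R -> R := fun u v => Derive (fun y => f u y) v.

Fixpoint Ck (k : nat) (U : R -> R -> Prop) (f : R -> R -> R) : Prop :=
  match k with
  | O => forall a b, U a b -> continuous2_at f a b
  | S k' => (forall a b, U a b ->
                ex_derive (fun x => f x b) a /\ ex_derive (fun y => f a y) b)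
            /\ Ck k' U (pu f) /\ Ck k' U (pv f)
  end.

Definition smooth_on (U : R -> R -> Prop) (f : R -> R -> R) : Prop :=
  forall k, Ck k U f.

Definition Kset (u1 v1 : R) : R -> R -> Prop :=
  fun u v => 0 <= u <= u1 /\ v1 <= v.

Definition C_in (u0 v0 : R) : R -> R -> Prop := fun u v => 0 <= u <= u0 /\ v = v0.
Definition C_out (v0 : R) : R -> R -> Prop := fun u v => u = 0 /\ v0 <= v.

(* Causal structure of (a subset of) K(u0,v0) with metric -Omega^2 du dv,
   u and v increasing to the future.  Since K is a product of intervals,
   within K:  q in J^-(p) iff q <= p coordinatewise, q in I^-(p) iff
   q < p in both coordinates. *)
Definition Jminus (K : R -> R -> Prop) (a b : R) : R -> R -> Prop :=
  fun u v => K u v /\ u <= a /\ v <= b.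
Definition Jplus (K : R -> R -> Prop) (a b : R) : R -> R -> Prop :=
  fun u v => K u v /\ a <= u /\ b <= v.
Definition Iminus (K : R -> R -> Prop) (a b : R) : R -> R -> Prop :=
  fun u v => K u v /\ u < a /\ v < b.

(* Intrinsic causal relation of the spacetime G: there is a (continuous)
   future-directed causal curve inside G from (a,b) to (c,d), i.e. a curve
   along which u and v are both non-decreasing. *)
Definition causal_in (G : R -> R -> Prop) (a b c d : R) : Prop :=
  exists gu gv : R -> R,
    continuity gu /\ continuity gv /\
    gu 0 = a /\ gv 0 = b /\ gu 1 = c /\ gv 1 = d /\
    (forall s t, 0 <= s -> s <= t -> t <= 1 -> gu s <= gu t /\ gv s <= gv t) /\
    (forall t, 0 <= t -> t <= 1 -> G (gu t) (gv t)).

(* Global hyperbolicity: all causal diamonds J^+(p) cap J^-(q) are compact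
   (causality is automatic: u+v is a time function). *)
Definition globally_hyperbolic (G : R -> R -> Prop) : Prop :=
  forall a b c d, G a b -> G c d ->
    compact2 (fun u v => causal_in G a b u v /\ causal_in G u v c d).

Definition hawking_mass (Omega r : R -> R -> R) : R -> R -> R :=
  fun u v => r u v / 2 * (1 + 4 * / (Omega u v) ^ 2 * pu r u v * pv r u v).

Definition regR (G : R -> R -> Prop) (r : R -> R -> R) : R -> R -> Prop :=
  fun u v => G u v /\ pv r u v > 0 /\ pu r u v < 0.
Definition regT (G : R -> R -> Prop) (r : R -> R -> R) : R -> R -> Prop :=
  fun u v => G u v /\ pv r u v < 0 /\ pu r u v < 0.
Definition regA (G : R -> R -> Prop) (r : R -> R -> R) : R -> R -> Prop :=
  fun u v => G u v /\ pv r u v = 0 /\ pu r u v < 0.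

Definition regW (G : R -> R -> Prop) (r : R -> R -> R) (rplus delta : R) :
  R -> R -> Prop := fun u v => G u v /\ r u v >= rplus - delta.

(* Main.v *)
Require Import Defs.
From Stdlib Require Import Reals.
From Coquelicot Require Import Coquelicot.
Open Scope R_scope.
From Stdlib Require Import Lra Classical.

Lemma open_R (u0 v0 : R) (G U : R -> R -> Prop) (r : R -> R -> R) :
  rel_open (Kset u0 v0) G -> (forall u v, G u v -> U u v) -> smooth_on U r ->
  forall a b, regR G r a b -> exists e, 0 < e /\
    forall u v, in_ball a b e u v -> Kset u0 v0 u v -> regR G r u v.
Proof.
  intros HGo HGU Hs a b [Ga [Hv Hu]].
  destruct (Hs 1%nat) as [_ [Cu Cv]]. simpl in Cu, Cv.
  destruct (HGo a b Ga) as [e1 [He1 H1]].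
  destruct (Cu a b (HGU a b Ga) (- pu r a b)) as [e2 [He2 H2]]; [lra|].
  destruct (Cv a b (HGU a b Ga) (pv r a b)) as [e3 [He3 H3]]; [lra|].
  exists (Rmin e1 (Rmin e2 e3)). split.
  { repeat apply Rmin_pos; auto. }
  intros u v Hb HK.
  assert (Hb1 : in_ball a b e1 u v).
  { unfold in_ball in *. assert (Rmin e1 (Rmin e2 e3) <= e1) by apply Rmin_l.
    assert (0 < Rmin e1 (Rmin e2 e3)) by (repeat apply Rmin_pos; auto).
    nra. }
  assert (Hb2 : in_ball a b e2 u v).
  { unfold in_ball in *. assert (Rmin e1 (Rmin e2 e3) <= e2).
    { eapply Rle_trans; [apply Rmin_r| apply Rmin_l]. }
    assert (0 < Rmin e1 (Rmin e2 e3)) by (repeat apply Rmin_pos; auto).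
    nra. }
  assert (Hb3 : in_ball a b e3 u v).
  { unfold in_ball in *. assert (Rmin e1 (Rmin e2 e3) <= e3).
    { eapply Rle_trans; [apply Rmin_r| apply Rmin_r]. }
    assert (0 < Rmin e1 (Rmin e2 e3)) by (repeat apply Rmin_pos; auto).
    nra. }
  specialize (H2 u v Hb2). specialize (H3 u v Hb3).
  apply Rabs_def2 in H2. apply Rabs_def2 in H3.
  split; [apply H1; auto|]. lra.
Qed.

Lemma mono_col (G U : R -> R -> Prop) (r : R -> R -> R) :
  (forall u v, G u v -> U u v) -> smooth_on U r ->
  forall a b c, b <= c -> (forall v, b <= v <= c -> G a v /\ 0 <= pv r a v) ->
  r a b <= r a c.
Proof.
  intros HGU Hs a b c Hbc H.
  destruct (Hs 1%nat) as [Hd _]. simpl in Hd.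
  assert (D : forall x, b <= x <= c -> is_derive (fun y => r a y) x (pv r a x)).
  { intros x Hx. destruct (H x Hx) as [Gx _].
    destruct (Hd a x (HGU a x Gx)) as [_ E]. apply Derive_correct. exact E. }
  destruct (MVT_gen (fun y => r a y) b c (pv r a)) as [x [Hx Eq]].
  { intros x Hx. rewrite Rmin_left in Hx by lra. rewrite Rmax_right in Hx by lra.
    apply D. lra. }
  { intros x Hx. rewrite Rmin_left in Hx by lra. rewrite Rmax_right in Hx by lra.
    apply continuity_pt_filterlim. apply (ex_derive_continuous (fun y => r a y)).
    eexists. apply D. lra. }
  rewrite Rmin_left in Hx by lra. rewrite Rmax_right in Hx by lra.
  destruct (H x Hx) as [_ P]. simpl in Eq. nra.
Qed.

Lemma ball_half a b e u v : 0 < e -> Rabs (u - a) <= e/2 -> Rabs (v - b) <= e/2 ->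
  in_ball a b e u v.
Proof.
  intros He H1 H2. unfold in_ball.
  apply Rabs_le_between in H1 as [? ?]. apply Rabs_le_between in H2 as [? ?].
  assert ((u-a)^2 <= (e/2)^2) by nra. assert ((v-b)^2 <= (e/2)^2) by nra. nra.
Qed.

Section Gen.
Variables (u0 v0 u1 v1 : R) (P : R -> R -> Prop).
Hypothesis Hu1 : 0 < u1 <= u0.
Hypothesis Hv1 : v0 <= v1.
Hypothesis Popen : forall a b, P a b -> exists e, 0 < e /\
  forall u v, in_ball a b e u v -> Kset u0 v0 u v -> P u v.

Lemma strip v : v1 <= v -> (forall u, 0 <= u <= u1 -> P u v) ->
  exists eta, 0 < eta /\ forall u w, 0 <= u <= u1 -> v <= w <= v + eta -> P u w.
Proof.
  intros Hv Hrow.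
  set (E := fun x => 0 <= x <= u1 /\ exists eta, 0 < eta /\
          forall u w, 0 <= u <= x -> v <= w <= v + eta -> P u w).
  assert (E0 : E 0).
  { destruct (Popen 0 v (Hrow 0 ltac:(lra))) as [e [He H]].
    split; [lra|]. exists (e/2). split; [lra|]. intros u w Hu Hw.
    apply H. apply ball_half; auto; rewrite Rabs_le_between; lra.
    unfold Kset; lra. }
  destruct (completeness E) as [c [Hub Hlub]].
  { exists u1. intros x [Hx _]. lra. }
  { exists 0; auto. }
  assert (c0 : 0 <= c) by (apply Hub; auto).
  assert (c1 : c <= u1) by (apply Hlub; intros x [Hx _]; lra).
  destruct (Popen c v (Hrow c ltac:(lra))) as [e [He H]].
  assert (Ex : exists x, E x /\ c - e/2 < x).
  { apply NNPP; intro N. assert (c <= c - e/2); [|lra].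
    apply Hlub. intros x Ex. apply Rnot_lt_le. intro L. apply N. eauto. }
  destruct Ex as [x [[Hx0 [eta [Heta Hx]]] Hxc]].
  assert (Hx' : x <= c) by (apply Hub; split; [lra|]; eauto).
  assert (Em : E (Rmin (c + e/2) u1)).
  { split. { split; [apply Rmin_glb; lra | apply Rmin_r]. }
    exists (Rmin eta (e/2)). split; [apply Rmin_pos; lra|].
    intros u w Hu Hw.
    assert (Rmin eta (e/2) <= eta) by apply Rmin_l.
    assert (Rmin eta (e/2) <= e/2) by apply Rmin_r.
    assert (Rmin (c + e/2) u1 <= c + e/2) by apply Rmin_l.
    assert (Rmin (c + e/2) u1 <= u1) by apply Rmin_r.
    destruct (Rle_lt_dec u x).
    - apply Hx; lra.
    - apply H. apply ball_half; auto; rewrite Rabs_le_between; lra.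
      unfold Kset; lra. }
  assert (Hm : Rmin (c + e/2) u1 <= c) by (apply Hub; auto).
  assert (Hcu : c = u1).
  { destruct (Rle_dec (c + e/2) u1).
    - rewrite Rmin_left in Hm; lra.
    - rewrite Rmin_right in Hm; lra. }
  subst c. destruct Em as [_ [eta' [He' Hm']]]. exists eta'. split; auto.
  intros u w Hu Hw. apply Hm'; auto.
  split; [lra|]. apply Rmin_glb; lra.
Qed.

Hypothesis Prow : forall u, 0 <= u <= u1 -> P u v1.
Hypothesis Pcol : forall v, v1 <= v -> P 0 v.
Hypothesis Pcorner : forall a b, 0 < a <= u1 -> v1 < b ->
  (forall u v, 0 <= u <= a -> v1 <= v <= b -> ~ (u = a /\ v = b) -> P u v) -> P a b.

Lemma gen_main : forall u v, 0 <= u <= u1 -> v1 <= v -> P u v.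
Proof.
  apply NNPP; intro N.
  assert (Hbad : exists a0 b0, 0 <= a0 <= u1 /\ v1 <= b0 /\ ~ P a0 b0).
  { apply NNPP; intro N2. apply N. intros u v Hu Hv. apply NNPP; intro. apply N2; eauto. }
  destruct Hbad as [a0 [b0 [Ha0 [Hb0 Nb]]]].
  set (E := fun x => v1 <= x /\ forall u w, 0 <= u <= u1 -> v1 <= w <= x -> P u w).
  destruct (completeness E) as [vs [Hub Hlub]].
  { exists b0. intros x [Hx Hg]. apply Rnot_lt_le; intro L. apply Nb. apply Hg; lra. }
  { exists v1. split; [lra|]. intros u w Hu Hw. replace w with v1 by lra. auto. }
  destruct (strip v1 ltac:(lra) Prow) as [eta1 [Heta1 Hs1]].
  assert (Hvs1 : v1 + eta1 <= vs).
  { apply Hub. split; [lra|]. intros u w Hu Hw.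
    destruct (Rle_lt_dec w v1). { replace w with v1 by lra; auto. } apply Hs1; lra. }
  assert (Below : forall u w, 0 <= u <= u1 -> v1 <= w < vs -> P u w).
  { intros u w Hu Hw.
    assert (Ex : exists x, E x /\ w < x).
    { apply NNPP; intro N3. assert (vs <= w); [|lra].
      apply Hlub. intros x Ex. apply Rnot_lt_le. intro L. apply N3. eauto. }
    destruct Ex as [x [[_ Hx] Hwx]]. apply Hx; lra. }
  assert (Row : forall u, 0 <= u <= u1 -> P u vs).
  { set (F := fun x => 0 <= x <= u1 /\ forall u, 0 <= u <= x -> P u vs).
    destruct (completeness F) as [a [Hubf Hlubf]].
    { exists u1. intros x [Hx _]. lra. }
    { exists 0. split; [lra|]. intros u Hu. replace u with 0 by lra. apply Pcol. lra. }
    assert (a0' : 0 <= a).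
    { apply Hubf. split; [lra|]. intros u Hu. replace u with 0 by lra. apply Pcol. lra. }
    assert (a1 : a <= u1) by (apply Hlubf; intros x [Hx _]; lra).
    assert (Lt : forall u, 0 <= u < a -> P u vs).
    { intros u Hu.
      assert (Ex : exists x, F x /\ u < x).
      { apply NNPP; intro N3. assert (a <= u); [|lra].
        apply Hlubf. intros x Ex. apply Rnot_lt_le. intro L. apply N3. eauto. }
      destruct Ex as [x [[_ Hx] Hux]]. apply Hx; lra. }
    assert (Pa : P a vs).
    { destruct (Req_dec a 0) as [Z|NZ]. { rewrite Z. apply Pcol. lra. }
      apply Pcorner; [lra|lra|].
      intros u w Hu Hw Hne. destruct (Rlt_dec w vs).
      - apply Below; lra.
      - assert (w = vs) by lra. subst w. apply Lt. split; [lra|].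
        destruct (Req_dec u a); [exfalso; apply Hne; auto|lra]. }
    destruct (Popen a vs Pa) as [e [He H]].
    assert (Fm : F (Rmin (a + e/2) u1)).
    { split. { split; [apply Rmin_glb; lra | apply Rmin_r]. }
      intros u Hu.
      assert (Rmin (a + e/2) u1 <= a + e/2) by apply Rmin_l.
      assert (Rmin (a + e/2) u1 <= u1) by apply Rmin_r.
      destruct (Rlt_dec u a). { apply Lt; lra. }
      apply H. apply ball_half; auto; rewrite Rabs_le_between; lra.
      unfold Kset; lra. }
    assert (Hm : Rmin (a + e/2) u1 <= a) by (apply Hubf; auto).
    assert (Hau : a = u1).
    { destruct (Rle_dec (a + e/2) u1).
      - rewrite Rmin_left in Hm; lra.
      - rewrite Rmin_right in Hm; lra. }
    subst a. intros u Hu. destruct Fm as [_ Fm]. apply Fm.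
    split; [lra|]. apply Rmin_glb; lra. }
  destruct (strip vs ltac:(lra) Row) as [eta [Heta Hs]].
  assert (vs + eta <= vs); [|lra].
  apply Hub. split; [lra|]. intros u w Hu Hw.
  destruct (Rlt_dec w vs). { apply Below; lra. } apply Hs; lra.
Qed.
End Gen.
Theorem lemma2
  (u0 v0 : R) (Hu0 : 0 < u0) (Hv0 : 0 < v0)
  (G : R -> R -> Prop) (Omega r Tuu Tuv Tvv : R -> R -> R)
  (* G is a globally hyperbolic, relatively open subset of K(u0,v0)
     containing C_in and C_out *)
  (HGK : forall u v, G u v -> Kset u0 v0 u v)
  (HGopen : rel_open (Kset u0 v0) G)
  (HGgh : globally_hyperbolic G)
  (HCin : forall u v, C_in u0 v0 u v -> G u v)
  (HCout : forall u v, C_out v0 u v -> G u v)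
  (* smoothness of Omega, r, T on G (via an open neighbourhood U of G) *)
  (U : R -> R -> Prop) (HUopen : open2 U) (HGU : forall u v, G u v -> U u v)
  (HsO : smooth_on U Omega) (Hsr : smooth_on U r)
  (HsTuu : smooth_on U Tuu) (HsTuv : smooth_on U Tuv) (HsTvv : smooth_on U Tvv)
  (HOpos : forall u v, G u v -> 0 < Omega u v)
  (Hrnn : forall u v, G u v -> 0 <= r u v)
  (Hrpos : forall u v, C_in u0 v0 u v \/ C_out v0 u v -> 0 < r u v)
  (* Einstein equations in spherical symmetry *)
  (Hruu : forall u v, G u v ->
     pu (fun x y => / (Omega x y) ^ 2 * pu r x y) u v
     = - r u v * / (Omega u v) ^ 2 * Tuu u v)
  (Hrvv : forall u v, G u v ->
     pv (fun x y => / (Omega x y) ^ 2 * pv r x y) u v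
     = - r u v * / (Omega u v) ^ 2 * Tvv u v)
  (Hmu : forall u v, G u v ->
     pu (hawking_mass Omega r) u v
     = 2 * (r u v) ^ 2 * / (Omega u v) ^ 2
         * (Tuv u v * pu r u v - Tuu u v * pv r u v))
  (Hmv : forall u v, G u v ->
     pv (hawking_mass Omega r) u v
     = 2 * (r u v) ^ 2 * / (Omega u v) ^ 2
         * (Tuv u v * pv r u v - Tvv u v * pu r u v))
  (* r_+ = sup_{C_out} r and m_+ = sup_{C_out} m, both finite: (III), (IV) *)
  (rplus mplus : R)
  (Hrplus : is_lub (fun x => exists v, v0 <= v /\ x = r 0 v) rplus)
  (Hmplus : is_lub (fun x => exists v, v0 <= v /\ x = hawking_mass Omega r 0 v) mplus)
  (* (I) *)
  (HT : forall u v, G u v -> 0 <= Tuu u v /\ 0 <= Tuv u v /\ 0 <= Tvv u v)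
  (* (II) J^-(G) subset G *)
  (HJG : forall a b u v, G a b -> Jminus (Kset u0 v0) a b u v -> G u v)
  (* (IV) m >= 0 on C_out *)
  (Hmnn : forall u v, C_out v0 u v -> 0 <= hawking_mass Omega r u v)
  (* (V), (VI) *)
  (Hur : forall u v, C_out v0 u v -> pu r u v < 0)
  (Hvr : forall u v, C_out v0 u v -> pv r u v > 0)
  (* (VII), closures taken in K(u0,v0) *)
  (HVII : forall a b c d,
     Kset u0 v0 a b -> closure2 (regR G r) a b ->
     Kset u0 v0 c d -> closure2 (regR G r) c d ->
     Iminus (Kset u0 v0) a b c d ->
     (forall u v, Jminus (Kset u0 v0) a b u v -> Jplus (Kset u0 v0) c d u v ->
        ~ (u = a /\ v = b) -> regR G r u v \/ regA G r u v) ->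
     regR G r a b \/ regA G r a b)
  (delta : R) (Hdelta : 0 < delta)
  (* condition (A) on A cap W *)
  (HA : forall u v, regA G r u v -> regW G r rplus delta u v ->
     Tuv u v * / (Omega u v) ^ 2 < 1 / (4 * (r u v) ^ 2))
  (* A cap W is empty *)
  (HAW : forall u v, ~ (regA G r u v /\ regW G r rplus delta u v)) :
  exists u1 v1, 0 < u1 <= u0 /\ v0 <= v1 /\
    forall u v, Kset u1 v1 u v -> regW G r rplus delta u v /\ regR G r u v.
Proof.
  assert (Ev1 : exists v1, v0 <= v1 /\ rplus - delta < r 0 v1).
  { apply NNPP; intro N. destruct Hrplus as [Hub Hlub].
    assert (rplus <= rplus - delta); [|lra]. apply Hlub.
    intros x [v [Hv ->]]. apply Rnot_lt_le. intro L. apply N. eauto. }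
  destruct Ev1 as [v1 [Hv1 Hr1]].
  assert (Gc : forall v, v0 <= v -> regR G r 0 v).
  { intros v Hv. assert (C : C_out v0 0 v) by (split; auto; lra).
    split; [apply HCout; auto|]. split; [apply Hvr|apply Hur]; auto. }
  assert (Po : forall a b, regR G r a b -> exists e, 0 < e /\
    forall u v, in_ball a b e u v -> Kset u0 v0 u v -> regR G r u v).
  { apply open_R with U; auto. }
  destruct (Po 0 v1 (Gc v1 Hv1)) as [e1 [He1 H1]].
  assert (G01 : G 0 v1) by (apply Gc; auto).
  destruct (Hsr 0%nat 0 v1 (HGU 0 v1 G01) (r 0 v1 - (rplus - delta))) as [e2 [He2 H2]]; [lra|].
  set (u1 := Rmin u0 (Rmin e1 e2 / 2)).
  assert (Hm1 : Rmin e1 e2 <= e1) by apply Rmin_l.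
  assert (Hm2 : Rmin e1 e2 <= e2) by apply Rmin_r.
  assert (Hmp : 0 < Rmin e1 e2) by (apply Rmin_pos; auto).
  assert (Hu1 : 0 < u1 <= u0).
  { unfold u1. split; [apply Rmin_pos; lra| apply Rmin_l]. }
  assert (Hu1e : u1 <= Rmin e1 e2 / 2) by apply Rmin_r.
  assert (Row : forall u, 0 <= u <= u1 -> regR G r u v1 /\ rplus - delta < r u v1).
  { intros u Hu. split.
    - apply H1. apply ball_half; auto; rewrite Rabs_le_between; lra. unfold Kset; lra.
    - assert (B : in_ball 0 v1 e2 u v1).
      { apply ball_half; auto; rewrite Rabs_le_between; lra. }
      specialize (H2 u v1 B). apply Rabs_def2 in H2. lra. }
  assert (Main : forall u v, 0 <= u <= u1 -> v1 <= v -> regR G r u v).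
  { apply (gen_main u0 v0 u1 v1); auto.
    - intros u Hu. apply Row; auto.
    - intros v Hv. apply Gc. lra.
    - intros a b Ha Hb Hcorner.
      assert (KA : Kset u0 v0 a b) by (unfold Kset; lra).
      assert (CL : closure2 (regR G r) a b).
      { intros eps Heps. set (t := Rmin (eps/2) (b - v1)).
        assert (t <= eps/2) by apply Rmin_l. assert (t <= b - v1) by apply Rmin_r.
        assert (0 < t) by (apply Rmin_pos; lra).
        exists a, (b - t). split.
        * apply Hcorner; try lra; try (intros [_ E]; lra).
        * apply ball_half; [lra| |]; rewrite Rabs_le_between; lra. }
      assert (K0 : Kset u0 v0 0 v1) by (unfold Kset; lra).
      assert (CL0 : closure2 (regR G r) 0 v1).
      { intros eps Heps. exists 0, v1. split; auto. unfold in_ball.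
        replace (0-0) with 0 by ring. replace (v1 - v1) with 0 by ring. nra. }
      assert (IM : Iminus (Kset u0 v0) a b 0 v1) by (unfold Iminus, Kset; lra).
      destruct (HVII a b 0 v1 KA CL K0 CL0 IM) as [HR|HAa].
      + intros u v [Ku [Hua Hvb]] [_ [Hu0' Hv1']] Hne. left. destruct Ku as [Ku1 Ku2]. apply Hcorner; [lra|lra|exact Hne].
      + exact HR.
      + exfalso. apply (HAW a b). split; auto. split; [apply HAa|].
        assert (r a v1 <= r a b).
        { apply (mono_col G U r HGU Hsr); [lra|]. intros v Hv.
          destruct (Rlt_dec v b).
          - assert (regR G r a v) by (apply Hcorner; [lra|lra|intros [_ E]; lra]).
            destruct H as [? [? ?]]. split; auto; lra.
          - replace v with b by lra. destruct HAa as [? [? ?]]. split; auto; lra. }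
        assert (rplus - delta < r a v1) by (apply Row; lra). lra. }
  exists u1, v1. split; auto. split; auto.
  intros u v [Hu Hv]. split; [|apply Main; auto].
  assert (GR := Main u v Hu Hv). split; [apply GR|].
  assert (r u v1 <= r u v).
  { apply (mono_col G U r HGU Hsr); [lra|]. intros w Hw.
    destruct (Main u w Hu ltac:(lra)) as [? [? ?]]. split; auto; lra. }
  assert (rplus - delta < r u v1) by (apply Row; lra). lra.
Qed.
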